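(* Let $\mathcal{L}_1=\langle c_1,G_1\rangle$ and $\mathcal{L}_2=\langle c_2,G_2\rangle$ be logical zonotopes in $\mathbb{B}^n$. Let $\tilde c_1=c_1\oplus\mathbf{1}$, $\tilde c_2=c_2\oplus\mathbf{1}$, and $$\tilde G=[\tilde c_1g_{2,1},\dots,\tilde c_1g_{2,\gamma_2},\tilde c_2g_{1,1},\dots,\tilde c_2g_{1,\gamma_1},g_{1,1}g_{2,1},\dots,g_{1,\gamma_1}g_{2,\gamma_2}]$$ (last block over all pairs $(i,j)$). Then the Minkowski OR satisfies $\{z_1\vee z_2: z_1\in\mathcal{L}_1,z_2\in\mathcal{L}_2\}\subseteq\langle \tilde c_1\tilde c_2\oplus\mathbf{1},\tilde G\rangle$, and the Minkowski NOR satisfies $\{\neg(z_1\vee z_2): z_1\in\mathcal{L}_1,z_2\in\mathcal{L}_2\}\subseteq\langle \tilde c_1\tilde c_2,\tilde G\rangle$.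
   Context: $\mathbb{B}=\{0,1\}$; $\mathbf{1}$ is the all-ones vector. For binary vectors, $\oplus$ denotes componentwise XOR, $\neg$ componentwise negation, $\vee$ componentwise OR, and juxtaposition $ab$ componentwise AND; for $g\in\mathbb{B}^n$, $\beta\in\mathbb{B}$, $g\beta$ is $g$ if $\beta=1$ and $0$ otherwise. A logical zonotope is $\langle c,G\rangle=\{x\in\mathbb{B}^n: x=c\oplus g_1\beta_1\oplus\cdots\oplus g_\gamma\beta_\gamma,\ \beta_i\in\{0,1\}\}$ for $c\in\mathbb{B}^n$, $G=[g_1,\dots,g_\gamma]\in\mathbb{B}^{n\times\gamma}$; $G_1=[g_{1,1},\dots,g_{1,\gamma_1}]$, $G_2=[g_{2,1},\dots,g_{2,\gamma_2}]$. *)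

(* Defs.v *)
From mathcomp Require Import all_boot.
Set Implicit Arguments. Unset Strict Implicit. Unset Printing Implicit Defensive.

Definition bvec (n : nat) := {ffun 'I_n -> bool}.

Definition bxor n (u v : bvec n) : bvec n := [ffun i => addb (u i) (v i)].
Definition band n (u v : bvec n) : bvec n := [ffun i => u i && v i].
Definition bor  n (u v : bvec n) : bvec n := [ffun i => u i || v i].
Definition bneg n (u : bvec n) : bvec n := [ffun i => ~~ u i].
Definition bones n : bvec n := [ffun _ => true].
Definition bzero n : bvec n := [ffun _ => false].

Definition bscale n (g : bvec n) (b : bool) : bvec n := if b then g else bzero n.

(* A generator matrix G = [g_1, ..., g_gamma] is the sequence of its columns. *)
Definition in_lz n (x c : bvec n) (G : seq (bvec n)) : Prop :=
  exists bs : seq bool, size bs = size G /\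
    x = foldr (fun p acc => bxor (bscale p.1 p.2) acc) c (zip G bs).

Definition Gtilde n (c1 c2 : bvec n) (G1 G2 : seq (bvec n)) : seq (bvec n) :=
  let c1t := bxor c1 (bones n) in
  let c2t := bxor c2 (bones n) in
  [seq band c1t g | g <- G2] ++ [seq band c2t g | g <- G1]
  ++ [seq band g1 g2 | g1 <- G1, g2 <- G2].

(* Main.v *)
Require Import Defs.
From mathcomp Require Import all_boot.

Definition Sk n (k : 'I_n) (G : seq (bvec n)) (bs : seq bool) : bool :=
  foldr (fun (p : bvec n * bool) acc => addb (p.1 k && p.2) acc) false (zip G bs).

Arguments Sk {n}.

Lemma evalk n (k : 'I_n) (c : bvec n) G bs :
  (foldr (fun p acc => bxor (bscale p.1 p.2) acc) c (zip G bs)) k = addb (c k) (Sk k G bs).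
Proof.
elim: G bs => [|g G IH] [|b bs] //=; rewrite /Sk /= ?addbF //.
rewrite ffunE IH /Sk; case: b => /=; rewrite ?ffunE; case: (g k); case: (c k) => //=.
Qed.

Lemma Sk_cat n (k : 'I_n) G1 G2 bs1 bs2 : size bs1 = size G1 ->
  Sk k (G1 ++ G2) (bs1 ++ bs2) = addb (Sk k G1 bs1) (Sk k G2 bs2).
Proof.
elim: G1 bs1 => [|g G IH] [|b bs] //= [] H; rewrite /Sk /= -/(Sk k _ _) ?IH //.
by rewrite /Sk addbA.
Qed.

Lemma Sk_map n (k : 'I_n) v G bs :
  Sk k (map (band v) G) bs = v k && Sk k G bs.
Proof.
elim: G bs => [|g G IH] [|b bs]; rewrite /Sk /= ?andbF //.
rewrite -/(Sk k _ _) IH ffunE; case: (v k); case: (g k); case b => //=.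
Qed.

Lemma Sk_map2 n (k : 'I_n) v c G bs :
  Sk k (map (band v) G) (map (andb c) bs) = (v k && c) && Sk k G bs.
Proof.
elim: G bs => [|g G IH] [|b bs]; rewrite /Sk /= ?andbF //.
rewrite -/(Sk k _ _) IH ffunE; case: (v k); case: (g k); case b; case c => //=.
Qed.

Lemma Sk_nilr n (k : 'I_n) G : Sk k G [::] = false.
Proof. by case: G. Qed.

Lemma Sk_nill n (k : 'I_n) bs : Sk k [::] bs = false.
Proof. by case: bs. Qed.

Lemma Sk_cons n (k : 'I_n) g G b bs : Sk k (g :: G) (b :: bs) = addb (g k && b) (Sk k G bs).
Proof. by []. Qed.

Lemma Sk_pairs n (k : 'I_n) G1 G2 bs1 bs2 : size bs2 = size G2 ->
  Sk k [seq band g1 g2 | g1 <- G1, g2 <- G2] [seq b1 && b2 | b1 <- bs1, b2 <- bs2]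
  = Sk k G1 bs1 && Sk k G2 bs2.
Proof.
move=> H2.
elim: G1 bs1 => [|g G IH] [|b bs] /=; rewrite ?Sk_nilr ?Sk_nill //.
rewrite Sk_cat ?size_map ?H2 //.
have -> : [seq band g g2 | g2 <- G2] = map (band g) G2 by [].
rewrite Sk_map2 IH Sk_cons.
by case: (g k); case: b; case: (Sk k G bs); case: (Sk k G2 bs2).
Qed.

Theorem mainTheorem5 (n : nat) (c1 c2 : bvec n) (G1 G2 : seq (bvec n)) :
  let c1t := bxor c1 (bones n) in
  let c2t := bxor c2 (bones n) in
  (forall z1 z2 : bvec n, in_lz z1 c1 G1 -> in_lz z2 c2 G2 ->
     in_lz (bor z1 z2) (bxor (band c1t c2t) (bones n)) (Gtilde c1 c2 G1 G2)) /\
  (forall z1 z2 : bvec n, in_lz z1 c1 G1 -> in_lz z2 c2 G2 ->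
     in_lz (bneg (bor z1 z2)) (band c1t c2t) (Gtilde c1 c2 G1 G2)).
Proof.
move=> c1t c2t.
have key : forall z1 z2, in_lz z1 c1 G1 -> in_lz z2 c2 G2 ->
  exists bs, size bs = size (Gtilde c1 c2 G1 G2) /\ forall c k,
   (foldr (fun p acc => bxor (bscale p.1 p.2) acc) c (zip (Gtilde c1 c2 G1 G2) bs)) k
   = addb (c k) (addb (~~ (z1 k || z2 k)) (c1t k && c2t k)).
  move=> z1 z2 [bs1 [H1 ->]] [bs2 [H2 ->]].
  exists (bs2 ++ bs1 ++ [seq b1 && b2 | b1 <- bs1, b2 <- bs2]); split.
    by rewrite /Gtilde !size_cat !size_map !size_allpairs H1 H2.
  move=> c k; rewrite evalk /Gtilde !Sk_cat ?size_map ?size_cat ?size_allpairs ?H1 ?H2 //.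
  rewrite !Sk_map Sk_pairs // !evalk /c1t /c2t !ffunE.
  by case: (c k); case: (c1 k); case: (c2 k); case: (Sk k G1 bs1); case: (Sk k G2 bs2).
split=> z1 z2 Hz1 Hz2; have [bs [Hs Hk]] := key z1 z2 Hz1 Hz2; exists bs; split => //;
  apply/ffunP => k; rewrite Hk !ffunE;
  by case: (z1 k); case: (z2 k); case: (c1 k); case: (c2 k).
Qed.
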